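(* Let $\mu>0$, $\lambda\ge0$, $k_M\in\mathbb{R}$, and let $k$ be the solution of $$k''=-\tfrac12k^3-\lambda k+\mu,\qquad k(0)=k_M,\quad k'(0)=0.$$ Assume $k$ is nonconstant and $k_M=\max k$. Then $k$ is defined and bounded on all of $\mathbb{R}$, and there exist real constants $\alpha,\beta,\gamma$ with $\gamma\in(-1,0)$, $\omega>0$ and $m\in(0,1)$ such that $$k(s)=\frac{\alpha\,\mathrm{cn}(\omega s\mid m)+\beta}{\gamma\,\mathrm{cn}(\omega s\mid m)+1}\qquad\text{for all }s\in\mathbb{R},$$ where $\mathrm{cn}(\cdot\mid m)$ is the Jacobi elliptic cosine function with parameter $m$.
   Context: The Jacobi elliptic function $y(u)=\mathrm{cn}(u\mid m)$, $m\in(0,1)$, is the solution of $(y')^2=(1-y^2)(1-m+my^2)$ with $y(0)=1$ (equivalently $\mathrm{cn}(u\mid m)=\cos\varphi$ where $u=\int_0^\varphi(1-m\sin^2\psi)^{-1/2}d\psi$). *)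

(* Defs.v *)
From Stdlib Require Import Reals.
Open Scope R_scope.

(* For m in (0,1) the integral is a
   strictly increasing bijection R -> R, so am is uniquely determined. *)
Definition is_jacobi_am (m : R) (am : R -> R) : Prop :=
  forall u : R,
    exists pr : Riemann_integrable
                  (fun psi => / sqrt (1 - m * (sin psi) ^ 2)) 0 (am u),
      RiemannInt pr = u.

Definition is_jacobi_cn (m : R) (cn : R -> R) : Prop :=
  exists am : R -> R, is_jacobi_am m am /\ forall u, cn u = cos (am u).

Definition kode (lam mu x : R) : R := - (1/2) * x ^ 3 - lam * x + mu.

(* Main.v *)
Require Import Defs.
From Stdlib Require Import Reals Lra Psatz.
From Coquelicot Require Import Coquelicot.
Open Scope R_scope.

Definition pal kM kn A B := (B*kM - A*kn)/(A+B).
Definition pbe kM kn A B := (A*kn + B*kM)/(A+B).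
Definition pga A B := (B-A)/(A+B).
Definition pm kM kn A B := ((kM-kn)^2 - (A-B)^2)/(4*A*B).

Lemma alg kM kn lam mu A B C : 0 < A -> 0 < B -> 0 < kM + kn ->
  A^2 = 2*kM^2+4*lam+(kM+kn)^2 -> B^2 = 2*kn^2+4*lam+(kM+kn)^2 ->
  8*mu = (kM+kn)*(4*lam+kM^2+kn^2) -> pga A B * C + 1 <> 0 ->
  - (pal kM kn A B - pbe kM kn A B * pga A B) * (A*B/4) *
    (C*(1-pm kM kn A B*(1-C^2))/(pga A B * C + 1)^2
     - pm kM kn A B*(1-C^2)*C/(pga A B * C + 1)^2
     + 2*pga A B*(1-C^2)*(1-pm kM kn A B*(1-C^2))/(pga A B * C + 1)^3)
  = kode lam mu ((pal kM kn A B * C + pbe kM kn A B)/(pga A B * C + 1)).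
Proof.
  intros HA HB Hs h1 h2 h3 HD.
  remember (kM + kn) as s eqn:Es.
  assert (E1 : kM = (s + (A^2-B^2)/(2*s))/2).
  { rewrite h1, h2, Es. field. lra. }
  assert (E2 : kn = (s - (A^2-B^2)/(2*s))/2).
  { rewrite h1, h2, Es. field. lra. }
  assert (E3 : lam = (A^2 - 2*kM^2 - s^2)/4) by lra.
  assert (E4 : mu = s*(4*lam+kM^2+kn^2)/8) by lra.
  clear h1 h2 h3 Es. subst mu. subst lam. subst kM kn.
  unfold pga in HD.
  assert (HD' : (B - A) * C + (A + B) <> 0).
  { intro H; apply HD. replace ((B - A) / (A + B) * C + 1) with (((B - A) * C + (A + B))/(A+B)) by (field; lra). rewrite H. field. lra. }
  unfold kode, pal, pbe, pga, pm. field. repeat split; lra.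
Qed.
Lemma Dm_pos m x : 0 < m < 1 -> 0 < 1 - m * (sin x)^2.
Proof. intros Hm. pose proof (sin2_cos2 x). pose proof (pow2_ge_0 (cos x)). unfold Rsqr in *. simpl in *. nra. Qed.

Lemma g_ge1 m x : 0 < m < 1 -> 1 <= / sqrt (1 - m * (sin x)^2).
Proof.
  intros Hm. pose proof (Dm_pos m x Hm).
  assert (0 <= m * (sin x)^2) by (apply Rmult_le_pos; [lra| apply pow2_ge_0]).
  assert (Hs : sqrt (1 - m * (sin x)^2) <= 1).
  { rewrite <- sqrt_1 at 2. apply sqrt_le_1_alt. lra. }
  assert (0 < sqrt (1 - m * (sin x)^2)) by (apply sqrt_lt_R0; lra).
  rewrite <- Rinv_1 at 1. apply Rinv_le_contravar; lra.
Qed.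

Lemma g_cont m x : 0 < m < 1 -> continuous (fun psi => / sqrt (1 - m * (sin psi)^2)) x.
Proof.
  intros Hm. apply (@ex_derive_continuous R_AbsRing R_NormedModule). auto_derive.
  pose proof (Dm_pos m x Hm). split; [lra|].
  split; [|easy]. apply Rgt_not_eq. apply sqrt_lt_R0; lra.
Qed.

Lemma am_exists m : 0 < m < 1 -> exists am : R -> R, is_jacobi_am m am /\ am 0 = 0 /\
  forall u, derivable_pt_lim am u (sqrt (1 - m * (sin (am u))^2)).
Proof.
  intros Hm.
  set (g := fun psi => / sqrt (1 - m * (sin psi)^2)).
  set (F := fun x => RInt g 0 x).
  assert (Hex : forall x y, ex_RInt g x y).
  { intros x y. apply (@ex_RInt_continuous R_CompleteNormedModule). intros; apply g_cont; auto. }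
  assert (HF : forall x, derivable_pt_lim F x (g x)).
  { intros x. apply is_derive_Reals. apply (@is_derive_RInt R_NormedModule g F 0 x).
    - apply filter_forall. intros y. apply (@RInt_correct R_CompleteNormedModule). apply Hex.
    - apply g_cont; auto. }
  assert (HF0 : F 0 = 0) by (unfold F; apply (@RInt_point R_CompleteNormedModule)).
  assert (Hmono : forall x y, x <= y -> y - x <= F y - F x).
  { intros x y Hxy. destruct (Req_dec x y) as [<-|Hne]; [lra|].
    destruct (MVT_cor2 F g x y) as [c [Hc _]]; [lra| intros; apply HF |].
    rewrite Hc. pose proof (g_ge1 m c Hm). unfold g in *. nra. }
  assert (Hcont : continuity F).
  { intros x. apply derivable_continuous_pt. exists (g x). apply HF. }
  assert (Hsurj : forall u, {x | F x = u}).
  { intros u.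
    destruct (IVT_cor (fun x => F x - u) (- Rabs u) (Rabs u)) as [x [_ Hx]].
    - apply continuity_minus; [exact Hcont| apply continuity_const; intros ? ?; auto].
    - pose proof (Rabs_pos u); lra.
    - pose proof (Hmono (- Rabs u) 0). pose proof (Hmono 0 (Rabs u)).
      pose proof (Rabs_pos u). pose proof (Rle_abs u). pose proof (Rabs_maj2 u).
      assert (F (- Rabs u) - u <= 0) by lra. assert (0 <= F (Rabs u) - u) by lra. nra.
    - exists x. lra. }
  set (am := fun u => proj1_sig (Hsurj u)).
  assert (Ham : forall u, F (am u) = u) by (intros u; exact (proj2_sig (Hsurj u))).
  assert (Hlip : forall u v, u <= v -> 0 <= am v - am u <= v - u).
  { intros u v Huv. destruct (Rle_dec (am u) (am v)).
    - pose proof (Hmono _ _ r). rewrite !Ham in H. lra.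
    - pose proof (Hmono (am v) (am u)). rewrite !Ham in H. lra. }
  assert (Hamc : forall u, continuity_pt am u).
  { intros u. unfold continuity_pt, continue_in, limit1_in, limit_in. intros eps Heps.
    exists eps. split; [lra|]. intros x [_ Hx]. simpl in *. unfold R_dist in *.
    destruct (Rle_dec u x).
    - pose proof (Hlip u x r). rewrite Rabs_right in Hx by lra. rewrite Rabs_right; lra.
    - pose proof (Hlip x u ltac:(lra)). rewrite Rabs_left in Hx by lra.
      rewrite Rabs_left1; lra. }
  exists am. split; [|split].
  - intros u. exists (ex_RInt_Reals_0 _ _ _ (Hex 0 (am u))).
    rewrite <- RInt_Reals. apply Ham.
  - assert (F (am 0) = F 0) by (rewrite Ham, HF0; auto).
    destruct (Rle_dec (am 0) 0).
    + pose proof (Hmono _ _ r). lra.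
    + pose proof (Hmono 0 (am 0)). lra.
  - intros u.
    assert (Pr : forall a, am (u-1) <= a <= am (u+1) -> derivable_pt F a).
    { intros a _. exists (g a). apply HF. }
    assert (Hinc : am (u-1) <= am u <= am (u+1)).
    { pose proof (Hlip (u-1) u). pose proof (Hlip u (u+1)). lra. }
    pose proof (Ranalysis5.derivable_pt_lim_recip_interv F am (u-1) (u+1) u Pr (Hamc u)
      ltac:(lra) ltac:(lra) Hinc) as H.
    assert (Hd : derive_pt F (am u) (Pr (am u) Hinc) = g (am u)).
    { apply derive_pt_eq_0. apply HF. }
    rewrite Hd in H.
    assert (Hg : g (am u) <> 0) by (pose proof (g_ge1 m (am u) Hm); unfold g; lra).
    specialize (H (fun x _ => Ham x) Hg).
    unfold g in H. rewrite Rdiv_1_l, Rinv_inv in H. exact H.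
Qed.
Lemma dpl_eq f x l l' : l = l' -> derivable_pt_lim f x l -> derivable_pt_lim f x l'.
Proof. intros ->; auto. Qed.

Lemma dpl_minus f g x lf lg : derivable_pt_lim f x lf -> derivable_pt_lim g x lg ->
  derivable_pt_lim (fun y => f y - g y) x (lf - lg).
Proof. intros; apply (derivable_pt_lim_minus f g); auto. Qed.

Lemma dpl_plus f g x lf lg : derivable_pt_lim f x lf -> derivable_pt_lim g x lg ->
  derivable_pt_lim (fun y => f y + g y) x (lf + lg).
Proof. intros; apply (derivable_pt_lim_plus f g); auto. Qed.

Lemma dpl_mult f g x lf lg : derivable_pt_lim f x lf -> derivable_pt_lim g x lg ->
  derivable_pt_lim (fun y => f y * g y) x (lf * g x + f x * lg).
Proof. intros; apply (derivable_pt_lim_mult f g); auto. Qed.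

Lemma dpl_chain (H θ : R -> R) s lt lh : derivable_pt_lim θ s lt ->
  derivable_pt_lim H (θ s) lh -> derivable_pt_lim (fun s => H (θ s)) s (lh * lt).
Proof. intros; apply (derivable_pt_lim_comp θ H); auto. Qed.

Lemma dpl_exp C s : derivable_pt_lim (fun s => exp (C * s)) s (C * exp (C * s)).
Proof.
  apply is_derive_Reals. auto_derive; auto. ring.
Qed.

Lemma gron_fwd (w w' : R -> R) C x y : x < y ->
  (forall s, x <= s <= y -> derivable_pt_lim w s (w' s)) ->
  (forall s, x <= s <= y -> w' s <= C * w s) -> w x = 0 ->
  (forall s, x <= s <= y -> 0 <= w s) -> w y = 0.
Proof.
  intros Hxy Hd Hle H0 Hpos.
  set (phi := fun s => exp (- C * s) * w s).
  destruct (MVT_cor2 phi (fun s => - C * exp (-C * s) * w s + exp (-C*s) * w' s) x y Hxy)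
    as [c [Hc Hcin]].
  { intros c Hc. unfold phi. apply (dpl_mult (fun s => exp (- C * s)) w); [apply (dpl_exp (-C))| apply Hd; auto]. }
  unfold phi in Hc. rewrite H0 in Hc.
  assert (E : 0 < exp (- C * c)) by apply exp_pos.
  assert (E2 : 0 < exp (- C * y)) by apply exp_pos.
  pose proof (Hle c ltac:(lra)). pose proof (Hpos y ltac:(lra)).
  assert (Hb : exp (- C * c) * (w' c - C * w c) <= 0).
  { apply Rmult_le_0_l; lra. }
  assert (Hb2 : exp (- C * c) * (w' c - C * w c) * (y - x) <= 0).
  { apply Rmult_le_0_r; lra. }
  assert (exp (- C * y) * w y <= 0) by nra.
  nra.
Qed.

Lemma gron_bwd (w w' : R -> R) C x y : x < y ->
  (forall s, x <= s <= y -> derivable_pt_lim w s (w' s)) ->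
  (forall s, x <= s <= y -> - C * w s <= w' s) -> w y = 0 ->
  (forall s, x <= s <= y -> 0 <= w s) -> w x = 0.
Proof.
  intros Hxy Hd Hle H0 Hpos.
  set (phi := fun s => exp (C * s) * w s).
  destruct (MVT_cor2 phi (fun s => C * exp (C * s) * w s + exp (C*s) * w' s) x y Hxy)
    as [c [Hc Hcin]].
  { intros c Hc. unfold phi. apply (dpl_mult (fun s => exp (C * s)) w); [apply (dpl_exp C)| apply Hd; auto]. }
  unfold phi in Hc. rewrite H0 in Hc.
  assert (E : 0 < exp (C * c)) by apply exp_pos.
  assert (E2 : 0 < exp (C * x)) by apply exp_pos.
  pose proof (Hle c ltac:(lra)). pose proof (Hpos x ltac:(lra)).
  assert (Hb : 0 <= exp (C * c) * (w' c + C * w c)).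
  { apply Rmult_le_pos; lra. }
  assert (Hb2 : 0 <= exp (C * c) * (w' c + C * w c) * (y - x)).
  { apply Rmult_le_pos; lra. }
  assert (exp (C * x) * w x <= 0) by nra.
  nra.
Qed.

Lemma bound_on (f : R -> R) x y : x <= y -> (forall c, x <= c <= y -> continuity_pt f c) ->
  exists M, forall c, x <= c <= y -> Rabs (f c) <= M.
Proof.
  intros Hxy Hc.
  destruct (continuity_ab_maj f x y Hxy Hc) as [p1 [H1 _]].
  destruct (continuity_ab_maj (fun z => - f z) x y Hxy) as [p2 [H2 _]].
  { intros c Hc'. apply continuity_pt_opp. auto. }
  exists (Rabs (f p1) + Rabs (f p2)). intros c Hc'.
  specialize (H1 c Hc'). specialize (H2 c Hc'). simpl in H2.
  pose proof (Rle_abs (f p1)). pose proof (Rabs_maj2 (f p2)).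
  pose proof (Rabs_pos (f p1)). pose proof (Rabs_pos (f p2)).
  unfold Rabs at 1; destruct (Rcase_abs (f c)); lra.
Qed.

Lemma wbound lam mu M x y v : -M <= x <= M -> -M <= y <= M ->
  Rabs (2 * (x - y) * v + 2 * v * (kode lam mu x - kode lam mu y))
  <= (1 + 3/2 * M^2 + Rabs lam) * ((x - y) * (x - y) + v * v).
Proof.
  intros [h1 h2] [h3 h4].
  assert (Ew : 2 * (x - y) * v + 2 * v * (kode lam mu x - kode lam mu y)
     = 2 * (x - y) * v * (1 - (x^2 + x*y + y^2)/2 - lam)).
  { unfold kode. field. }
  rewrite Ew.
  assert (HP0 : 0 <= x^2 + x*y + y^2) by nra.
  assert (HP1 : x^2 + x*y + y^2 <= 3 * M^2) by nra.
  set (C := 1 + 3/2 * M^2 + Rabs lam).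
  set (u := x - y).
  set (P := x^2 + x*y + y^2) in *.
  set (Q := 1 - P/2 - lam).
  assert (HQ : - C <= Q <= C).
  { unfold Q, C. pose proof (Rle_abs lam). pose proof (Rabs_maj2 lam). split; nra. }
  assert (0 <= (C + Q) * (u - v)^2) by (apply Rmult_le_pos; [lra| apply pow2_ge_0]).
  assert (0 <= (C - Q) * (u + v)^2) by (apply Rmult_le_pos; [lra| apply pow2_ge_0]).
  assert (0 <= (C + Q) * (u + v)^2) by (apply Rmult_le_pos; [lra| apply pow2_ge_0]).
  assert (0 <= (C - Q) * (u - v)^2) by (apply Rmult_le_pos; [lra| apply pow2_ge_0]).
  clearbody C u P Q.
  unfold Rabs; destruct (Rcase_abs (2*u*v*Q)).
  - assert (E : (C + Q) * (u + v)^2 + (C - Q) * (u - v)^2 = 2*C*(u*u+v*v) + 4*Q*u*v) by ring.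
    lra.
  - assert (E : (C + Q) * (u - v)^2 + (C - Q) * (u + v)^2 = 2*C*(u*u+v*v) - 4*Q*u*v) by ring.
    lra.
Qed.

Lemma ode_uniq lam mu a b (k k' K K' : R -> R) : a < 0 < b ->
  (forall s, a < s < b -> derivable_pt_lim k s (k' s)) ->
  (forall s, a < s < b -> derivable_pt_lim k' s (kode lam mu (k s))) ->
  (forall s, a < s < b -> derivable_pt_lim K s (K' s)) ->
  (forall s, a < s < b -> derivable_pt_lim K' s (kode lam mu (K s))) ->
  k 0 = K 0 -> k' 0 = K' 0 -> forall t, a < t < b -> k t = K t.
Proof.
  intros Hab Hk Hk' HK HK' H0 H0' t Ht.
  set (lo := Rmin 0 t). set (hi := Rmax 0 t).
  assert (Hlh : lo <= hi) by (unfold lo, hi, Rmin, Rmax; destruct (Rle_dec 0 t); lra).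
  assert (Hin : forall c, lo <= c <= hi -> a < c < b).
  { intros c Hc. unfold lo, hi, Rmin, Rmax in Hc. destruct (Rle_dec 0 t); lra. }
  destruct (bound_on k lo hi Hlh) as [M1 HM1].
  { intros c Hc. apply derivable_continuous_pt. exists (k' c). apply Hk; auto. }
  destruct (bound_on K lo hi Hlh) as [M2 HM2].
  { intros c Hc. apply derivable_continuous_pt. exists (K' c). apply HK; auto. }
  set (M := Rabs M1 + Rabs M2).
  assert (Hb1 : forall c, lo <= c <= hi -> -M <= k c <= M).
  { intros c Hc. specialize (HM1 c Hc). pose proof (Rle_abs M1). pose proof (Rabs_pos M2).
    pose proof (Rabs_maj2 (k c)). pose proof (Rle_abs (k c)). unfold M; lra. }
  assert (Hb2 : forall c, lo <= c <= hi -> -M <= K c <= M).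
  { intros c Hc. specialize (HM2 c Hc). pose proof (Rle_abs M2). pose proof (Rabs_pos M1).
    pose proof (Rabs_maj2 (K c)). pose proof (Rle_abs (K c)). unfold M; lra. }
  set (C := 1 + 3/2 * M^2 + Rabs lam).
  set (w := fun s => (k s - K s) * (k s - K s) + (k' s - K' s) * (k' s - K' s)).
  set (w' := fun s => 2 * (k s - K s) * (k' s - K' s)
                 + 2 * (k' s - K' s) * (kode lam mu (k s) - kode lam mu (K s))).
  assert (Hwd : forall s, lo <= s <= hi -> derivable_pt_lim w s (w' s)).
  { intros s Hs. specialize (Hin s Hs).
    assert (Hu := dpl_minus _ _ _ _ _ (Hk s Hin) (HK s Hin)).
    assert (Hv := dpl_minus _ _ _ _ _ (Hk' s Hin) (HK' s Hin)).
    eapply dpl_eq; [| apply dpl_plus; apply dpl_mult; eauto].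
    unfold w'. ring. }
  assert (Hbnd : forall s, lo <= s <= hi -> Rabs (w' s) <= C * w s).
  { intros s Hs. unfold w', w, C. apply wbound; auto. }
  assert (Hpos : forall s, 0 <= w s).
  { intros s. unfold w. pose proof (Rle_0_sqr (k s - K s)). pose proof (Rle_0_sqr (k' s - K' s)).
    unfold Rsqr in *. lra. }
  assert (Hw0 : w 0 = 0) by (unfold w; rewrite H0, H0'; ring).
  assert (Hwt : w t = 0).
  { destruct (Rtotal_order 0 t) as [Hlt|[Heq|Hgt]].
    - assert (lo = 0) by (unfold lo, Rmin; destruct (Rle_dec 0 t); lra).
      assert (hi = t) by (unfold hi, Rmax; destruct (Rle_dec 0 t); lra).
      apply (gron_fwd w w' C 0 t Hlt).
      + intros s Hs; apply Hwd; lra.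
      + intros s Hs. pose proof (Hbnd s ltac:(lra)). pose proof (Rle_abs (w' s)). lra.
      + auto.
      + auto.
    - subst t. auto.
    - assert (lo = t) by (unfold lo, Rmin; destruct (Rle_dec 0 t); lra).
      assert (hi = 0) by (unfold hi, Rmax; destruct (Rle_dec 0 t); lra).
      apply (gron_bwd w w' C t 0 Hgt).
      + intros s Hs; apply Hwd; lra.
      + intros s Hs. pose proof (Hbnd s ltac:(lra)). pose proof (Rabs_maj2 (w' s)). lra.
      + auto.
      + auto. }
  unfold w in Hwt.
  pose proof (Rle_0_sqr (k t - K t)). pose proof (Rle_0_sqr (k' t - K' t)). unfold Rsqr in *.
  nra.
Qed.

Lemma dtheta (am : R -> R) m w s :
  (forall u, derivable_pt_lim am u (sqrt (1 - m * (sin (am u))^2))) ->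
  derivable_pt_lim (fun s => am (w * s)) s (sqrt (1 - m * (sin (am (w*s)))^2) * w).
Proof.
  intros Ham. apply (dpl_chain am (fun s => w * s)); [| apply Ham].
  apply is_derive_Reals. auto_derive; auto. ring.
Qed.

Lemma dK (am : R -> R) m al be ga w s :
  (forall u, derivable_pt_lim am u (sqrt (1 - m * (sin (am u))^2))) ->
  (forall x, ga * cos x + 1 <> 0) ->
  derivable_pt_lim (fun s => (al * cos (am (w*s)) + be) / (ga * cos (am (w*s)) + 1)) s
   (- (al - be*ga) * w * sin (am (w*s)) * sqrt (1 - m * (sin (am (w*s)))^2)
      / (ga * cos (am (w*s)) + 1)^2).
Proof.
  intros Ham HD.
  eapply dpl_eq; [| apply (dpl_chain (fun x => (al * cos x + be) / (ga * cos x + 1))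
                     (fun s => am (w * s))); [apply dtheta, Ham|]].
  2:{ apply is_derive_Reals. auto_derive; [apply HD|]. reflexivity. }
  specialize (HD (am (w*s))). field. auto.
Qed.

Lemma dK' (am : R -> R) m al be ga w s :
  0 < m < 1 ->
  (forall u, derivable_pt_lim am u (sqrt (1 - m * (sin (am u))^2))) ->
  (forall x, ga * cos x + 1 <> 0) ->
  derivable_pt_lim (fun s => - (al - be*ga) * w * sin (am (w*s)) * sqrt (1 - m * (sin (am (w*s)))^2)
      / (ga * cos (am (w*s)) + 1)^2) s
   (let S := sin (am (w*s)) in let C := cos (am (w*s)) in
    let Q := sqrt (1 - m * (sin (am (w*s)))^2) in let D := ga * C + 1 in
    - (al - be*ga) * w^2 * (C*Q^2/D^2 - m*S^2*C/D^2 + 2*ga*S^2*Q^2/D^3)).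
Proof.
  intros Hm Ham HD.
  eapply dpl_eq; [| apply (dpl_chain (fun x => - (al - be*ga) * w * sin x * sqrt (1 - m * (sin x)^2)
      / (ga * cos x + 1)^2)
                     (fun s => am (w * s))); [apply dtheta, Ham|]].
  2:{ apply is_derive_Reals. auto_derive; [|reflexivity].
      pose proof (Dm_pos m (am (w*s)) Hm). pose proof (HD (am (w*s))).
      assert (0 < sqrt (1 - m * sin (am (w * s)) ^ 2)) by (apply sqrt_lt_R0; lra).
      simpl in *. repeat split; auto; lra. }
  pose proof (Dm_pos m (am (w*s)) Hm) as HP.
  pose proof (HD (am (w*s))).
  assert (0 < sqrt (1 - m * sin (am (w * s)) ^ 2)) by (apply sqrt_lt_R0; lra).
  cbv zeta.
  replace (1 + - (m * (sin (am (w * s)) * (sin (am (w * s)) * 1)))) with (1 - m * sin (am (w*s))^2) by ring.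
  set (Q := sqrt (1 - m * sin (am (w * s)) ^ 2)) in *.
  set (S := sin (am (w * s))) in *. set (C := cos (am (w * s))) in *.
  clearbody Q S C.
  field. split; lra.
Qed.

Lemma sin2' x : sin x ^ 2 = 1 - cos x ^ 2.
Proof. pose proof (sin2_cos2 x). unfold Rsqr in H. simpl. lra. Qed.

Theorem mainTheorem16 (mu lam kM a b : R) (k k' : R -> R)
  (Hmu : 0 < mu) (Hlam : 0 <= lam) (Ha : a < 0) (Hb : 0 < b)
  (Hk : forall s, a < s < b -> derivable_pt_lim k s (k' s))
  (Hk' : forall s, a < s < b -> derivable_pt_lim k' s (kode lam mu (k s)))
  (H0 : k 0 = kM) (H0' : k' 0 = 0)
  (Hnc : exists s, a < s < b /\ k s <> k 0)
  (Hmax : forall s, a < s < b -> k s <= kM) :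
  exists K K' : R -> R,
    (forall s, derivable_pt_lim K s (K' s)) /\
    (forall s, derivable_pt_lim K' s (kode lam mu (K s))) /\
    (forall s, a < s < b -> K s = k s) /\
    (exists M, forall s, Rabs (K s) <= M) /\
    exists alpha beta gamma omega m : R,
      -1 < gamma < 0 /\ 0 < omega /\ 0 < m < 1 /\
      exists cn : R -> R, is_jacobi_cn m cn /\
        forall s, K s = (alpha * cn (omega * s) + beta) / (gamma * cn (omega * s) + 1).
Proof.
  assert (Hab : a < 0 < b) by lra.
  assert (Hneg : kode lam mu kM < 0).
  { destruct (Rtotal_order (kode lam mu kM) 0) as [Hl|[He|Hg]]; [exact Hl| |].
    - exfalso. destruct Hnc as [s0 [Hs0 Hne]].
      apply Hne. rewrite H0.
      apply (ode_uniq lam mu a b k k' (fun _ => kM) (fun _ => 0) Hab Hk Hk'); auto.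
      + intros; apply derivable_pt_lim_const.
      + intros s _. cbv beta. rewrite He. apply derivable_pt_lim_const.
    - exfalso.
      pose proof (Hk' 0 ltac:(lra)) as Hd. rewrite H0 in Hd.
      destruct (Hd (kode lam mu kM / 2) ltac:(lra)) as [del Hdel].
      pose proof (cond_pos del) as Hdp.
      set (t := Rmin del b / 2).
      assert (Ht : 0 < t < del /\ t < b).
      { unfold t, Rmin. destruct (Rle_dec del b); lra. }
      destruct (MVT_cor2 k k' 0 t) as [c [Hc Hcin]]; [lra| intros; apply Hk; lra|].
      assert (Hc1 : c <> 0) by lra.
      assert (Hc2 : Rabs c < del) by (rewrite Rabs_right; lra).
      specialize (Hdel c Hc1 Hc2). rewrite Rplus_0_l, H0' in Hdel.
      set (x := (k' c - 0) / c) in Hdel.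
      assert (Hx : kode lam mu kM / 2 < x).
      { pose proof (Rabs_def2 _ _ Hdel). lra. }
      assert (Ex : k' c = x * c) by (unfold x; field; lra).
      pose proof (Hmax t ltac:(lra)). rewrite H0 in Hc.
      assert (0 < k' c) by (rewrite Ex; apply Rmult_lt_0_compat; lra).
      assert (0 < k' c * (t - 0)) by (apply Rmult_lt_0_compat; lra). lra. }
  assert (HkM : 0 < kM) by (unfold kode in Hneg; nra).
  destruct (IVT_cor (fun x => (kM + x) * (4*lam + kM^2 + x^2) - 8*mu) (-kM) kM)
    as [kn [Hkn Hh]].
  { reg. }
  { lra. }
  { unfold kode in Hneg.
    assert (0 < (kM + kM) * (4 * lam + kM ^ 2 + kM ^ 2) - 8 * mu) by nra.
    replace ((kM + - kM) * (4 * lam + kM ^ 2 + (- kM) ^ 2) - 8 * mu) with (- 8 * mu) by ring.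
    nra. }
  cbv beta in Hh.
  assert (Hkn1 : kn <> - kM).
  { intro E. rewrite E in Hh. replace ((kM + - kM) * (4 * lam + kM ^ 2 + (- kM) ^ 2) - 8 * mu) with (- 8 * mu) in Hh by ring. lra. }
  assert (Hkn2 : kn <> kM).
  { intro E. rewrite E in Hh. unfold kode in Hneg. nra. }
  assert (Hs : 0 < kM + kn) by lra.
  assert (Hd : 0 < kM - kn) by lra.
  assert (h3 : 8*mu = (kM+kn)*(4*lam+kM^2+kn^2)) by lra.
  set (A := sqrt (2*kM^2+4*lam+(kM+kn)^2)).
  assert (h1 : A^2 = 2*kM^2+4*lam+(kM+kn)^2) by (apply pow2_sqrt; nra).
  assert (HA : 0 < A) by (apply sqrt_lt_R0; nra).
  clearbody A.
  set (B := sqrt (2*kn^2+4*lam+(kM+kn)^2)).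
  assert (h2 : B^2 = 2*kn^2+4*lam+(kM+kn)^2) by (apply pow2_sqrt; nra).
  assert (HB : 0 < B) by (apply sqrt_lt_R0; nra).
  clearbody B.
  assert (HAB : B < A) by nra.
  assert (HAs : kM + kn < A) by nra.
  assert (HBs : kM + kn <= B) by nra.
  assert (HAmB : A - B < kM - kn).
  { assert ((A - B) * (A + B) = 2 * (kM + kn) * (kM - kn)) by nra. nra. }
  assert (Hdlt : (kM - kn)^2 < (A + B)^2) by nra.
  assert (Hm : 0 < pm kM kn A B < 1).
  { assert (E : pm kM kn A B * (4*A*B) = (kM-kn)^2 - (A-B)^2) by (unfold pm; field; lra).
    assert (0 < A * B) by nra.
    split; nra. }
  assert (Hga : -1 < pga A B < 0).
  { assert (E : pga A B * (A + B) = B - A) by (unfold pga; field; lra). split; nra. }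
  set (w := sqrt (A*B) / 2).
  assert (Hw2 : w^2 = A*B/4).
  { unfold w. replace ((sqrt (A * B) / 2)^2) with (sqrt (A*B)^2 / 4) by field.
    rewrite pow2_sqrt; nra. }
  assert (Hw : 0 < w) by (unfold w; assert (0 < sqrt (A*B)) by (apply sqrt_lt_R0; nra); lra).
  clearbody w.
  destruct (am_exists (pm kM kn A B) Hm) as [am [Hjac [Ham0 Ham]]].
  assert (HD : forall x, 0 < pga A B * cos x + 1).
  { intros x. pose proof (COS_bound x). nra. }
  assert (HD' : forall x, pga A B * cos x + 1 <> 0) by (intros x; specialize (HD x); lra).
  set (K := fun s => (pal kM kn A B * cos (am (w*s)) + pbe kM kn A B)
                       / (pga A B * cos (am (w*s)) + 1)).
  set (K' := fun s => - (pal kM kn A B - pbe kM kn A B * pga A B) * w * sin (am (w*s))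
                 * sqrt (1 - pm kM kn A B * (sin (am (w*s)))^2)
                 / (pga A B * cos (am (w*s)) + 1)^2).
  assert (HKd : forall s, derivable_pt_lim K s (K' s)).
  { intros s. unfold K, K'. apply dK; auto. }
  assert (HK'd : forall s, derivable_pt_lim K' s (kode lam mu (K s))).
  { intros s. unfold K'. eapply dpl_eq; [| apply dK'; auto].
    cbv zeta.
    rewrite pow2_sqrt by (apply Rlt_le, Dm_pos; auto).
    rewrite sin2', Hw2.
    unfold K.
    pose proof (alg kM kn lam mu A B (cos (am (w*s))) HA HB Hs h1 h2 h3 (HD' _)) as E.
    rewrite <- E. pose proof (HD' (am (w*s))). field. auto. }
  exists K, K'. split; [exact HKd|]. split; [exact HK'd|]. split.
  { intros s Hs'. symmetry.
    apply (ode_uniq lam mu a b k k' K K' Hab Hk Hk'); auto.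
    - rewrite H0. unfold K. rewrite Rmult_0_r, Ham0, cos_0.
      unfold pal, pbe, pga. field. split; lra.
    - rewrite H0'. unfold K'. rewrite Rmult_0_r, Ham0, sin_0. field.
      rewrite cos_0. lra. }
  split.
  { exists ((Rabs (pal kM kn A B) + Rabs (pbe kM kn A B)) / (1 + pga A B)).
    intros s. unfold K.
    set (C := cos (am (w*s))).
    pose proof (COS_bound (am (w*s))) as HC. fold C in HC.
    assert (HDC : 1 + pga A B <= pga A B * C + 1) by nra.
    assert (HN : Rabs (pal kM kn A B * C + pbe kM kn A B) <= Rabs (pal kM kn A B) + Rabs (pbe kM kn A B)).
    { eapply Rle_trans; [apply Rabs_triang|]. rewrite Rabs_mult.
      assert (Rabs C <= 1) by (apply Rabs_le; lra).
      pose proof (Rabs_pos (pal kM kn A B)). nra. }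
    unfold Rdiv. rewrite Rabs_mult, Rabs_inv, (Rabs_right (pga A B * C + 1)) by (specialize (HD (am (w*s))); fold C in HD; lra).
    apply Rmult_le_compat; auto.
    - apply Rabs_pos.
    - apply Rlt_le, Rinv_0_lt_compat. specialize (HD (am (w*s))); fold C in HD; lra.
    - apply Rinv_le_contravar; lra. }
  exists (pal kM kn A B), (pbe kM kn A B), (pga A B), w, (pm kM kn A B).
  split; [exact Hga|]. split; [exact Hw|]. split; [exact Hm|].
  exists (fun u => cos (am u)). split.
  - exists am. split; [exact Hjac| intros; reflexivity].
  - intros s. reflexivity.
Qed.
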